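(* Let $G$ be a finite non-solvable group and let $p$ be a fixed prime divisor of $|G|$. Then $G$ has a non-nilpotent maximal subgroup whose order is divisible by $p$. *)

(* Defs.v *)
From mathcomp Require Import all_boot all_fingroup all_solvable.

(* Main.v *)
Require Import Defs.
From mathcomp Require Import all_boot all_fingroup all_solvable.
From mathcomp Require Import all_algebra.
Set Implicit Arguments. Unset Strict Implicit. Unset Printing Implicit Defensive.
Import GRing.Theory.
From mathcomp Require Import zify.
From Stdlib Require Import Classical.
Open Scope group_scope.

Lemma transfer_lemma (gT : finGroupType) (L S : {group gT}) (p : nat) :
  p.-Sylow(L) S -> S :!=: 1 ->
  (forall x u, x \in L -> u \in S -> u ^ x \in S ->
     exists2 s, s \in S & u ^ x = u ^ s) ->
  L^`(1) != L.
Proof.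
move=> sylS ntS fus; apply/eqP => perL.
have sSL := pHall_sub sylS; have pS := pHall_pgroup sylS.
have nSS' : S \subset 'N(S^`(1)) := normal_norm (der_normal 1 S).
pose alpha := restrm nSS' (coset S^`(1)).
have abelA : abelian (alpha @* S).
  by rewrite morphim_restrm setIid; have := der_abelian 0 S.
have [_ [u Su nS'u]] := properP (sol_der1_proper (pgroup_sol pS) (subxx S) ntS).
have Lu : u \in L := subsetP sSL u Su.
have abT : abelian (transfer_morphism L abelA @* L).
  by apply/centsP => a _ b _; apply: addrC.
have kerL : L^`(1) \subset 'ker (transfer_morphism L abelA).
  rewrite ker_trivg_morphim der_sub /= morphim_der //.
  by rewrite (derG1P abT).
have tu0 : transfer L abelA u = 0%R.
  have := mker (subsetP kerL u _); rewrite perL => /(_ Lu) //.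
pose X := transversal (rcosets S L :* <[u]>) L.
have trX : is_transversal X (rcosets S L :* <[u]>) L.
  exact: transversalP (rcosets_cycle_partition sSL Lu).
have sXL : X \subset L := transversal_sub trX.
rewrite (transfer_cycle_expansion sSL abelA Lu trX) in tu0.
pose n_ := fun x0 : gT => #|<[u]> : S :* x0|.
change (\sum_(x in X) restrm (transfer_morph_subproof alpha) (FiniteModule.fmod abelA \o alpha) (u ^+ n_ x ^ x^-1)%g = 0)%R in tu0.
have term : forall x, x \in X ->
  restrm (transfer_morph_subproof alpha) (FiniteModule.fmod abelA \o alpha)
     (u ^+ n_ x ^ x^-1) = (FiniteModule.fmod abelA (alpha u) *+ n_ x)%R.
  move=> x Xx.
  have Lx : x \in L := subsetP sXL x Xx.
  have Sw : u ^+ n_ x ^ x^-1 \in S.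
    have := mulg_exp_card_rcosets S u x; rewrite mem_rcoset.
    by rewrite conjgE invgK mulgA.
  have [s Ss ->] := fus x^-1 (u ^+ n_ x) (groupVr Lx) (groupX _ Su) Sw.
  rewrite /restrm /= /alpha morphJ ?groupX //.
  have cm : commute (alpha (u ^+ n_ x)) (alpha s).
    by apply: (centsP abelA); rewrite mem_morphim ?groupX.
  rewrite conjgE cm mulKg.
  by rewrite /alpha morphX // FiniteModule.fmodX // mem_morphim.
rewrite (eq_bigr _ term) sumrMnr (sum_index_rcosets_cycle sSL Lu trX) in tu0.
have Au : alpha u \in alpha @* S by rewrite mem_morphim.
have := congr1 val tu0.
rewrite FiniteModule.fmvalZ FiniteModule.fmodK // FiniteModule.fmval0 => /eqP.
rewrite -order_dvdn => ordA.
have ordAu : #[alpha u] %| #|S|.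
  by apply: dvdn_trans (morph_order _ Su) (order_dvdG Su).
have [_ _ p'i] := and3P sylS.
have cop : coprime #|S| #|L : S| := pnat_coprime pS p'i.
have : coprime #[alpha u] #[alpha u].
  exact: coprime_dvdr ordA (coprime_dvdl ordAu cop).
rewrite /coprime gcdnn order_eq1 => /eqP a1.
by case/negP: nS'u; apply: coset_idr; [apply: subsetP nSS' u Su | exact: a1].
Qed.

Lemma Sylow_ntriv (gT : finGroupType) (G P : {group gT}) (p : nat) :
  prime p -> p %| #|G| -> p.-Sylow(G) P -> P :!=: 1.
Proof.
move=> pr_p pG sylP.
by rewrite -cardG_gt1 (card_Hall sylP) p_part_gt1 mem_primes pr_p cardG_gt0 pG.
Qed.

Lemma core (gT : finGroupType) (G : {group gT}) (p : nat) :
  prime p -> p %| #|G| -> ~~ solvable G ->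
  (forall N : {group gT}, N <| G -> solvable N -> N :=: 1) ->
  (forall M : {group gT}, maximal M G -> p %| #|M| -> nilpotent M) -> False.
Proof.
move=> pr_p pG nsolG rad1 maxnil.
have W : forall K : {group gT}, K \subset G -> K :!=: G -> p %| #|K| -> nilpotent K.
  move=> K sKG neKG pK; have [eKG|[M maxM sKM]] := maximal_exists sKG.
    by rewrite eKG eqxx in neKG.
  apply: (nilpotentS sKM); apply: maxnil maxM _; exact: dvdn_trans pK (cardSg sKM).
have Npro : forall Q : {group gT}, p.-group Q -> Q \subset G -> Q :!=: 1 ->
    nilpotent 'N_G(Q).
  move=> Q pQ sQG ntQ; apply: W; first exact: subsetIl.
    apply/eqP => eNG; have nQG : Q <| G by rewrite /normal sQG -eNG subsetIr.
    by case/eqP: ntQ; apply: rad1 nQG (pgroup_sol pQ).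
  have [_ pQ' _] := pgroup_pdiv pQ ntQ.
  by apply: dvdn_trans pQ' (cardSg _); rewrite subsetI sQG normG.
have TI : forall P1 P2 : {group gT}, p.-Sylow(G) P1 -> p.-Sylow(G) P2 ->
    P1 :&: P2 != 1 -> P1 :=: P2.
  move=> P1 P2; have [n] := ubnP (#|P1| - #|P1 :&: P2|).
  elim: n P1 P2 => // n IHn P1 P2 /ltnSE le_n syl1 syl2 ntD.
  have cardP : #|P1| = #|P2| by rewrite (card_Hall syl1) (card_Hall syl2).
  have [eD1 | ltD1] := eqVproper (subsetIl P1 P2).
    apply/eqP; rewrite eqEcard cardP leqnn andbT; rewrite -eD1; exact: subsetIr.
  have ltD2 : P1 :&: P2 \proper P2.
    rewrite properEcard subsetIr -cardP; exact: proper_card ltD1.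
  have sDG : P1 :&: P2 \subset G := subset_trans (subsetIl _ _) (pHall_sub syl1).
  have pD : p.-group (P1 :&: P2) := pgroupS (subsetIl _ _) (pHall_pgroup syl1).
  have nilN := Npro _ pD sDG ntD.
  have grow1 := nilpotent_proper_norm (pgroup_nil (pHall_pgroup syl1)) ltD1.
  have grow2 := nilpotent_proper_norm (pgroup_nil (pHall_pgroup syl2)) ltD2.
  have [P3 syl3 sTP3] := Sylow_superset (subset_trans (pcore_sub p _) (subsetIl G 'N(P1 :&: P2))) (pcore_pgroup p 'N_G(P1 :&: P2)).
  have sNi3 : forall Pi : {group gT}, p.-Sylow(G) Pi -> 'N_Pi(P1 :&: P2) \subset P3 :&: Pi.
    move=> Pi sylPi; rewrite subsetI subsetIl andbT; apply: subset_trans sTP3.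
    rewrite sub_Hall_pcore ?(nilpotent_pcore_Hall p nilN) //.
      exact: pgroupS (subsetIl _ _) (pHall_pgroup sylPi).
    by rewrite setSI // (pHall_sub sylPi).
  have ntI : forall Pi : {group gT}, p.-Sylow(G) Pi -> P1 :&: P2 \proper Pi ->
      (#|P1 :&: P2| < #|P3 :&: Pi|) && (P3 :&: Pi != 1).
    move=> Pi sylPi ltDi.
    have lt := proper_card (proper_sub_trans (nilpotent_proper_norm (pgroup_nil (pHall_pgroup sylPi)) ltDi) (sNi3 Pi sylPi)).
    by rewrite lt -cardG_gt1 (leq_ltn_trans _ lt) // cardG_gt0.
  have /andP[lt1 nt1] := ntI P1 syl1 ltD1.
  have /andP[lt2 nt2] := ntI P2 syl2 ltD2.
  have c3 : #|P3| = #|P1| by rewrite (card_Hall syl3) (card_Hall syl1).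
  have e13 : P3 :=: P1.
    apply: (IHn P3 P1 _ syl3 syl1 nt1).
    have sub : #|P3 :&: P1| <= #|P3| by rewrite subset_leq_card ?subsetIl.
    rewrite c3 in sub *; move: le_n lt1 sub.
    generalize #|P1| #|P3 :&: P1| #|P1 :&: P2|; clear; intros; lia.
  have e23 : P3 :=: P2.
    apply: (IHn P3 P2 _ syl3 syl2 nt2).
    have sub : #|P3 :&: P2| <= #|P3| by rewrite subset_leq_card ?subsetIl.
    rewrite c3 in sub *; move: le_n lt2 sub.
    generalize #|P1| #|P3 :&: P2| #|P1 :&: P2|; clear; intros; lia.
  by rewrite -e13 e23.
have fusP : forall (P : {group gT}) x u, p.-Sylow(G) P -> x \in G -> u \in P ->
    u != 1 -> u ^ x \in P -> x \in 'N(P).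
  move=> P x u sylP Gx Pu ntu Pux.
  have sylPx : p.-Sylow(G) (P :^ x)%G by rewrite pHallJ.
  have : P :&: P :^ x != 1.
    apply/trivgPn; exists (u ^ x); last by rewrite conjg_eq1.
    by rewrite inE Pux memJ_conjg Pu.
  move/(TI _ _ sylP sylPx) => ePx.
  by apply/normP; rewrite -ePx.
pose gP := [pred N : {group gT} | (N <| G) && ~~ solvable N].
have gPG : gP G by rewrite /= normal_refl nsolG.
have [L minL sLG] := mingroup_exists gPG.
case/mingroupP: minL => /andP[nLG nsolL] minL.
have perL : L^`(1) = L.
  have -> // := minL (L^`(1))%G _ (der_sub 1 L).
  rewrite /= (char_normal_trans (der_char 1 L) nLG) /=.
  apply/negP => solL'; case/negP: nsolL.
  by rewrite (series_sol (der_normal 1 L)) solL' abelian_sol //; have := der_abelian 0 L.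
have [P sylP] := Sylow_exists p G.
have ntP := Sylow_ntriv pr_p pG sylP.
have nilNP := Npro P (pHall_pgroup sylP) (pHall_sub sylP) ntP.
have p'L : ~~ (p %| #|L|).
  apply/negP => pL.
  have sylS := Sylow_setI_normal nLG sylP.
  have ntS := Sylow_ntriv pr_p pL sylS.
  suff fusL : forall x u, x \in L -> u \in L :&: P -> u ^ x \in L :&: P ->
      exists2 s, s \in L :&: P & u ^ x = u ^ s.
    by have := transfer_lemma sylS ntS fusL; rewrite perL eqxx.
  move=> x u Lx Su Sux.
  have [->|ntu] := eqVneq u 1; first by exists 1; rewrite ?group1 ?conj1g.
  have Gx := subsetP sLG x Lx.
  have sSP : L :&: P \subset P := subsetIr _ _.
  have xN := fusP P x u sylP Gx (subsetP sSP u Su) ntu (subsetP sSP _ Sux).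
  have nilK : nilpotent 'N_L(P) := nilpotentS (setSI _ sLG) nilNP.
  have sSK : L :&: P \subset 'N_L(P).
    by rewrite subsetI subsetIl (subset_trans sSP) ?normG.
  have sylSK := pHall_subl sSK (subsetIl _ _) sylS.
  have eS := eq_Hall_pcore (nilpotent_pcore_Hall p nilK) sylSK.
  have dK := nilpotent_pcoreC p nilK.
  have [_ defK cOO _] := dprodP dK.
  have : x \in 'O_p('N_L(P)) * 'O_p^'('N_L(P)) by rewrite defK inE Lx.
  case/mulsgP => s k Os Ok ->.
  exists s; first by rewrite eS.
  have Ous : u ^ s \in 'O_p('N_L(P)) by rewrite -eS groupJ // eS.
  have cm : commute k (u ^ s) by apply: (centsP cOO).
  by rewrite conjgM conjgE -cm mulKg.
have p'Lnat : p^'.-nat #|L| by rewrite p'natE.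
have key : forall r, r \in \pi(#|L|) -> #|L|`_r %| #|'C_L(P)|.
  move=> r pi_r.
  have [R sylR] := Sylow_exists r L.
  have frat := Frattini_arg nLG sylR.
  have rp : r != p.
    apply/eqP => erp; case/negP: p'L; rewrite -erp.
    by move: pi_r; rewrite mem_primes => /and3P[].
  have ntR : R :!=: 1.
    by rewrite -cardG_gt1 (card_Hall sylR) p_part_gt1.
  have sRG : R \subset G := subset_trans (pHall_sub sylR) sLG.
  have rR := pHall_pgroup sylR.
  have neNG : 'N_G(R) != G.
    apply/eqP => eNG; have nRG : R <| G by rewrite /normal sRG -eNG subsetIr.
    by case/eqP: ntR; apply: rad1 nRG (pgroup_sol rR).
  have cardNp : (#|'N_G(R)|`_p = #|G|`_p)%N.
    have := mul_cardG L 'N_G(R)%G; rewrite /= frat => /(congr1 (fun m => partn m p)).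
    rewrite !partnM ?cardG_gt0 // (part_p'nat p'Lnat).
    rewrite (part_p'nat (pnat_dvd (cardSg (subsetIl _ _)) p'Lnat)).
    by rewrite mul1n muln1.
  have pN : p %| #|'N_G(R)|.
    have : (1 < #|'N_G(R)|`_p)%N by rewrite cardNp p_part_gt1 mem_primes pr_p cardG_gt0 pG.
    by rewrite p_part_gt1 mem_primes => /and3P[].
  have nilN := W _ (subsetIl _ _) neNG pN.
  have HallOp := nilpotent_pcore_Hall p nilN.
  have sylO : p.-Sylow(G) 'O_p('N_G(R)).
    rewrite pHallE (subset_trans (pcore_sub _ _) (subsetIl _ _)) /=.
    by rewrite (card_Hall HallOp) cardNp.
  have sRO' : R \subset 'O_p^'('N_G(R)).
    rewrite sub_Hall_pcore ?(nilpotent_pcore_Hall p^' nilN) //.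
      apply: sub_pgroup rR => q; rewrite !inE => /eqP ->; exact: rp.
    by rewrite subsetI sRG normG.
  have [_ _ cOO _] := dprodP (nilpotent_pcoreC p nilN).
  have cRO : R \subset 'C('O_p('N_G(R))) := subset_trans sRO' cOO.
  have [g Gg eO] := Sylow_trans sylP sylO.
  rewrite eO centJ in cRO.
  rewrite -(card_Hall sylR) -(cardJg R g^-1); apply: cardSg.
  rewrite subsetI !sub_conjgV cRO andbT.
  by rewrite (normP (subsetP (normal_norm nLG) g Gg)) (pHall_sub sylR).
have : #|L| %| #|'C_L(P)| by apply/(dvdn_partP _ (cardG_gt0 L)).
move=> dv.
have eL : 'C_L(P) = L.
  apply/eqP; rewrite eqEcard subsetIl /=; exact: dvdn_leq (cardG_gt0 _) dv.
have : L \subset 'N_G(P).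
  by rewrite subsetI sLG (subset_trans _ (cent_sub P)) // -eL subsetIr.
move/(nilpotentS)/(_ nilNP)/nilpotent_sol => solL.
by rewrite solL in nsolL.
Qed.

Unset Implicit Arguments.


Theorem theorem1p1 (gT : finGroupType) (G : {group gT}) (p : nat) :
  ~~ solvable G -> prime p -> p %| #|G| ->
  exists M : {group gT}, [/\ maximal M G, ~~ nilpotent M & p %| #|M|].
Proof.
have [n] := ubnP #|G|; elim: n gT G p => // n IHn gT G p /ltnSE-leGn nsolG pr_p pG.
case: (pickP [pred N : {group gT} | (N <| G) && solvable N && (N :!=: 1)]) => [N /= /andP[/andP[nNG solN] ntN] | rad].
  have ltQ : #|G / N| < n := leq_trans (ltn_quotient ntN (normal_sub nNG)) leGn.
  have nsolQ : ~~ solvable (G / N) by move: nsolG; rewrite (series_sol nNG) solN.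
  have lift : forall q, prime q -> q %| #|G / N| -> exists M : {group gT},
      [/\ maximal M G, ~~ nilpotent M, N \subset M & q %| #|M|].
    move=> q pr_q qQ.
    have [M' [maxM' nnilM' qM']] := IHn _ (G / N)%G q ltQ nsolQ pr_q qQ.
    pose M := (coset N @*^-1 M')%G.
    have sNM : N \subset M := sub_cosetpre M'.
    have sMG : M \subset G.
      by rewrite -(quotientGK nNG) cosetpreSK (proper_sub (maxgroupp maxM')).
    have nNM : N <| M := normalS sNM sMG nNG.
    have eM : M / N = M' := cosetpreK M'.
    exists M; split => //.
    - by rewrite -(quotient_maximal nNM nNG) eM.
    - by apply: contra nnilM' => nilM; rewrite -eM; exact: quotient_nil.
    - by apply: dvdn_trans qM' _; rewrite -eM dvdn_quotient.
  case: (boolP (p %| #|G / N|)) => pQ.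
    by have [M [maxM nnil _ pM]] := lift p pr_p pQ; exists M.
  have pN : p %| #|N|.
    move: pG; rewrite -(Lagrange (normal_sub nNG)) -card_quotient ?normal_norm //.
    by rewrite Euclid_dvdM // (negbTE pQ) orbF.
  have ntQ : 1 < #|G / N|.
    rewrite cardG_gt1; apply: contra nsolQ => /eqP ->; exact: solvable1.
  have [M [maxM nnil sNM _]] := lift _ (pdiv_prime ntQ) (pdiv_dvd _).
  by exists M; split => //; apply: dvdn_trans pN (cardSg sNM).
case: (classic (exists M : {group gT}, [/\ maximal M G, ~~ nilpotent M & p %| #|M|])) => // noM.
exfalso; apply: (core pr_p pG nsolG).
  move=> N nNG solN; apply/eqP; have := rad N; rewrite /= nNG solN /=.
  by move/negbFE.
move=> M maxM pM; apply/negPn/negP => nnil; apply: noM; exists M; split => //.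
Qed.
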